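(* Let $\mathcal{M}=\mathbb{C}^{3\times 3}$. The coordinate functions of the polynomial maps $c_3$ and $c_4$ are contained in the $\mathbb{C}$-linear span (inside $\mathbb{C}[\mathcal{M}]$) of the coordinate functions of $\mathcal{P}_1:\mathcal{M}\to\bigwedge^3\mathcal{M}$, $A\mapsto I_3\wedge A\wedge A^2$.
   Context: $c_3:\mathbb{C}^{3\times 3}\to\mathrm{S}^3(\mathbb{C}^3)^\star$ (homogeneous cubic forms on $\mathbb{C}^3$) sends $A$ to the cubic form $\underline{x}\mapsto\det(\underline{x}\,|\,A\underline{x}\,|\,A^2\underline{x})$ (the $3\times 3$ matrix with columns $\underline{x},A\underline{x},A^2\underline{x}$). $c_4:\mathbb{C}^{3\times 3}\to\mathrm{S}^3(\mathbb{C}^3)$ (homogeneous cubic forms on row vectors) sends $A$ to the cubic form $\underline{x}^T\mapsto\det$ of the $3\times 3$ matrix with rows $\underline{x}^T,\underline{x}^TA,\underline{x}^TA^2$. Coordinate functions of $c_3,c_4$ are the coefficients of the monomials of these cubic forms, viewed as polynomial functions of $A$; coordinate functions of $\mathcal{P}_1$ are taken with respect to a basis of $\bigwedge^3\mathbb{C}^{3\times3}$ (e.g. the $3\times 3$ minors of the $9\times 3$ matrix whose columns are the entries of $I_3$, $A$, $A^2$). *)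

(* Defs.v *)
From HB Require Import structures.
From mathcomp Require Import all_boot all_order all_algebra.
From mathcomp Require Import Rstruct.
From mathcomp Require Import complex.
From mathcomp Require Import mpoly.
Set Implicit Arguments. Unset Strict Implicit. Unset Printing Implicit Defensive.
Import GRing.Theory.
Local Open Scope ring_scope.

Definition C : Type := complex Rdefinitions.R.
HB.instance Definition _ := GRing.Field.on C.

(* c_3(A) : the cubic form x |-> det(x | A x | A^2 x), as a polynomial in
   x = ('X_0, 'X_1, 'X_2); column j is A^j x. *)
Definition c3 (A : 'M[C]_3) : {mpoly C[3]} :=
  \det (\matrix_(i < 3, j < 3) \sum_(k < 3) ((A ^+ j) i k)%:MP * 'X_k).

(* c_4(A) : the cubic form x^T |-> det of the matrix with rows
   x^T, x^T A, x^T A^2; row i is x^T A^i. *)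
Definition c4 (A : 'M[C]_3) : {mpoly C[3]} :=
  \det (\matrix_(i < 3, j < 3) \sum_(k < 3) 'X_k * ((A ^+ i) k j)%:MP).

Definition P1mx (A : 'M[C]_3) : 'M[C]_(3 * 3, 3) :=
  \matrix_(k < 3 * 3, j < 3) mxvec (A ^+ j) 0 k.

Definition incr3 (r : {ffun 'I_3 -> 'I_(3 * 3)}) : bool :=
  [forall i : 'I_3, forall j : 'I_3, (i < j)%N ==> (r i < r j)%N].

(* Coordinate functions of P_1(A) = I_3 /\ A /\ A^2 in the standard basis of
   /\^3 C^{3x3}: the 3x3 minors of P1mx A (rows r 0 < r 1 < r 2). *)
Definition P1coord (r : {ffun 'I_3 -> 'I_(3 * 3)}) (A : 'M[C]_3) : C :=
  \det (rowsub r (P1mx A)).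

(* Main.v *)
Require Import Defs.
From HB Require Import structures.
From mathcomp Require Import all_boot all_order all_algebra all_fingroup.
From mathcomp Require Import Rstruct complex mpoly.
From mathcomp Require Import zify.
Set Implicit Arguments. Unset Strict Implicit. Unset Printing Implicit Defensive.
Import GRing.Theory.
Local Open Scope ring_scope.

Lemma cb (R : comPzRingType) n p (X : 'M[R]_(n,p)) (Y : 'M[R]_(p,n)) :
  \det (X *m Y) =
  \sum_(f : {ffun 'I_n -> 'I_p}) (\prod_i X i (f i)) * \det (rowsub f Y).
Proof.
transitivity (\sum_(s : 'S_n) \sum_(f : {ffun 'I_n -> 'I_p})
   (-1) ^+ s * ((\prod_i X i (f i)) * \prod_i Y (f i) (s i))).
  apply: eq_bigr => s _; rewrite -big_distrr /=; congr (_ * _).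
  rewrite (eq_bigr (fun i => \sum_(k < p) X i k * Y k (s i))); last first.
    by move=> i _; rewrite mxE.
  rewrite (bigA_distr_bigA (fun i k => X i k * Y k (s i))) /=.
  by apply: eq_bigr => f _; rewrite big_split.
rewrite exchange_big; apply: eq_bigr => f _ /=.
rewrite /determinant big_distrr; apply: eq_bigr => s _ /=.
rewrite mulrCA; congr (_ * (_ * _)); apply: eq_bigr => i _.
by rewrite mxE.
Qed.

Definition i0 : 'I_3 := @Ordinal 3 0 isT.
Definition i1 : 'I_3 := @Ordinal 3 1 isT.
Definition i2 : 'I_3 := @Ordinal 3 2 isT.

Lemma ord3P (P : 'I_3 -> Prop) : P i0 -> P i1 -> P i2 -> forall i, P i.
Proof.
move=> H0 H1 H2 [[|[|[|k]]] Hk] //.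
- by rewrite (bool_irrelevance Hk isT).
- by rewrite (bool_irrelevance Hk isT).
- by rewrite (bool_irrelevance Hk isT).
Qed.

Lemma incr3E (g : {ffun 'I_3 -> 'I_(3 * 3)}) :
  incr3 g = ((g i0 < g i1) && (g i1 < g i2))%N.
Proof.
apply/idP/idP.
  move/forallP=> H.
  have h01 := implyP (forallP (H i0) i1) isT.
  by have h12 := implyP (forallP (H i1) i2) isT; rewrite h01 h12.
case/andP=> h1 h2; have h3 := ltn_trans h1 h2.
apply/forallP; elim/ord3P; apply/forallP; elim/ord3P; apply/implyP => //.
Qed.

Definition span3 (f : {ffun 'I_3 -> 'I_(3 * 3)}) :=
  exists k : {ffun 'I_3 -> 'I_(3 * 3)} -> C, forall M : 'M[C]_(3 * 3, 3),
    \det (rowsub f M) = \sum_(r | incr3 r) k r * \det (rowsub r M).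

Lemma span_incr f : incr3 f -> span3 f.
Proof.
move=> If; exists (fun r => (r == f)%:R) => M.
rewrite (bigD1 f) //= eqxx mul1r big1 ?addr0 // => r /andP[_ /negbTE ->].
by rewrite mul0r.
Qed.

Lemma det_rowsub_perm (f : {ffun 'I_3 -> 'I_(3 * 3)}) (s : 'S_3) (M : 'M[C]_(3 * 3, 3)) :
  \det (rowsub [ffun i => f (s i)] M) = (-1) ^+ s * \det (rowsub f M).
Proof.
have -> : rowsub [ffun i => f (s i)] M = perm_mx s *m rowsub f M.
  by rewrite -row_permE; apply/matrixP => i j; rewrite !mxE ffunE.
by rewrite det_mulmx det_perm.
Qed.

Lemma span_perm (f : {ffun 'I_3 -> 'I_(3 * 3)}) (s : 'S_3) : span3 [ffun i => f (s i)] -> span3 f.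
Proof.
case=> k Hk; exists (fun r => (-1) ^+ s * k r) => M.
have := det_rowsub_perm f s M; rewrite Hk => E.
rewrite -[LHS](signrMK s) -E big_distrr; apply: eq_bigr => r _.
exact: mulrA.
Qed.

Lemma span_all (f : {ffun 'I_3 -> 'I_(3 * 3)}) : span3 f.
Proof.
have Hz : forall i j, i != j -> f i = f j -> span3 f.
  move=> i j Hij Hf; exists (fun=> 0) => M.
  rewrite big1; last by move=> r _; rewrite mul0r.
  by apply: (determinant_alternate Hij) => k; rewrite !mxE Hf.
case: (ltngtP (f i0) (f i1)) => h01; case: (ltngtP (f i1) (f i2)) => h12;
  case: (ltngtP (f i0) (f i2)) => h02;
  first [ by apply: (Hz i0 i1) => //; apply: val_inj
        | by apply: (Hz i1 i2) => //; apply: val_inj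
        | by apply: (Hz i0 i2) => //; apply: val_inj
        | lia
        | by apply: span_incr; rewrite incr3E ?h01 ?h12
        | by apply: (span_perm (s := tperm i0 i1)); apply: span_incr;
             rewrite incr3E !ffunE !permE /=; lia
        | by apply: (span_perm (s := tperm i1 i2)); apply: span_incr;
             rewrite incr3E !ffunE !permE /=; lia
        | by apply: (span_perm (s := tperm i0 i2)); apply: span_incr;
             rewrite incr3E !ffunE !permE /=; lia
        | by apply: (span_perm (s := tperm i0 i1));
             apply: (span_perm (s := tperm i1 i2)); apply: span_incr;
             rewrite incr3E !ffunE !permE /=; lia
        | by apply: (span_perm (s := tperm i0 i2));
             apply: (span_perm (s := tperm i1 i2)); apply: span_incr;
             rewrite incr3E !ffunE !permE /=; lia
        ].
Qed.

Definition PM (A : 'M[C]_3) : 'M[{mpoly C[3]}]_(3 * 3, 3) :=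
  map_mx (@mpolyC 3 C) (P1mx A).

Lemma key (E : 'M[{mpoly C[3]}]_(3, 3 * 3)) (m : 'X_{1..3}) :
  exists lam : {ffun 'I_3 -> 'I_(3 * 3)} -> C, forall A : 'M[C]_3,
    (\det (E *m PM A))@_m = \sum_(r | incr3 r) lam r * P1coord r A.
Proof.
have [k Hk] := fin_all_exists span_all.
exists (fun r => \sum_(f : {ffun 'I_3 -> 'I_(3 * 3)})
                    (\prod_i E i (f i))@_m * k f r) => A.
rewrite cb raddf_sum.
transitivity (\sum_(f : {ffun 'I_3 -> 'I_(3 * 3)}) (\prod_i E i (f i))@_m *
                \sum_(r | incr3 r) k f r * P1coord r A).
  apply: eq_bigr => f _.
  have -> : rowsub f (PM A) = map_mx (@mpolyC 3 C) (rowsub f (P1mx A)).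
    by apply/matrixP => i j; rewrite !mxE.
  rewrite det_map_mx mulrC; rewrite [LHS](mcoeffCM (\det (rowsub f (P1mx A)))) mulrC; congr (_ * _).
  exact: Hk.
rewrite [RHS](eq_bigr (fun r => \sum_(f : {ffun 'I_3 -> 'I_(3 * 3)})
    (\prod_i E i (f i))@_m * (k f r * P1coord r A))); last first.
  by move=> r _ /=; rewrite big_distrl; apply: eq_bigr => f _ /=; rewrite mulrA.
rewrite [RHS]exchange_big; apply: eq_bigr => f _; exact: big_distrr.
Qed.

Definition E3 : 'M[{mpoly C[3]}]_(3, 3 * 3) :=
  \matrix_(i < 3, k < 3 * 3) \sum_(q < 3) (if k == mxvec_index i q then 'X_q else 0).

Lemma sum_sel (K : 'I_(3 * 3)) (x : {mpoly C[3]}) (g : 'I_(3 * 3) -> {mpoly C[3]}) :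
  \sum_(k < 3 * 3) (if k == K then x else 0) * g k = x * g K.
Proof.
rewrite (bigD1 K) //= eqxx big1 ?addr0 // => k /negbTE ->.
by rewrite mul0r.
Qed.

Lemma c3E A : c3 A = \det (E3 *m PM A).
Proof.
rewrite /c3; congr (\det _); apply/matrixP => i j; rewrite !mxE.
under [RHS]eq_bigr do rewrite !mxE big_distrl.
rewrite [RHS]exchange_big; apply: eq_bigr => q _ /=.
by rewrite (sum_sel (mxvec_index i q) 'X_q) mxvecE mulrC.
Qed.

Definition E4 : 'M[{mpoly C[3]}]_(3, 3 * 3) :=
  \matrix_(i < 3, k < 3 * 3) \sum_(p < 3) (if k == mxvec_index p i then 'X_p else 0).

Lemma c4E A : c4 A = \det (E4 *m PM A).
Proof.
rewrite /c4 -det_tr; congr (\det _); apply/matrixP => i j; rewrite !mxE.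
under [RHS]eq_bigr do rewrite !mxE big_distrl.
rewrite [RHS]exchange_big; apply: eq_bigr => q _ /=.
by rewrite (sum_sel (mxvec_index q i) 'X_q) mxvecE.
Qed.

Theorem proposition4p3 :
  forall m : 'X_{1..3},
    (exists lam : {ffun 'I_3 -> 'I_(3 * 3)} -> C,
       forall A : 'M[C]_3,
         (c3 A)@_m = \sum_(r | incr3 r) lam r * P1coord r A) /\
    (exists lam : {ffun 'I_3 -> 'I_(3 * 3)} -> C,
       forall A : 'M[C]_3,
         (c4 A)@_m = \sum_(r | incr3 r) lam r * P1coord r A).
Proof.
move=> m; split.
  have [lam H] := key E3 m; exists lam => A; by rewrite c3E.
have [lam H] := key E4 m; exists lam => A; by rewrite c4E.
Qed.
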